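(* Let $F\in[0,1]$ and $0\le p\le F$, and let $F'_{\max}(p,F)=\max\{F'_{00}(\rho_1\otimes\rho_2):\rho_1,\rho_2\in S_{p,F}\}$. Then $$F'_{\max}(p,F)=1-2p(1-F).$$ Moreover (for $p<1$), with $\tilde F=(F-p)/(1-p)$, $|\psi\rangle=\sqrt{\tilde F}|\Psi_{00}\rangle+\sqrt{1-\tilde F}|\Psi_{11}\rangle$ and $\rho_{\mathrm{opt}}=p|\Psi_{00}\rangle\langle\Psi_{00}|+(1-p)|\psi\rangle\langle\psi|$, one has $\rho_{\mathrm{opt}}\in S_{p,F}$ and $F'_{00}(\rho_{\mathrm{opt}}\otimes\rho_{\mathrm{opt}})=F'_{\max}(p,F)$.
   Context: For a pair of qubit registers $(R,T)$, $|\Psi_{ij}\rangle_{RT}=(I_R\otimes (X^iZ^j)_T)\tfrac1{\sqrt2}(|00\rangle+|11\rangle)_{RT}$, $i,j\in\{0,1\}$ ($X,Z$ Pauli matrices). $S_{p,F}$ is the set of two-qubit density operators $\rho$ such that $\rho=p|\Psi_{00}\rangle\langle\Psi_{00}|+(1-p)\sigma$ for some density operator $\sigma$ and $\langle\Psi_{00}|\rho|\Psi_{00}\rangle=F$. Postselected swap: $\rho_1$ acts on registers $(A_1,B_1)$ and $\rho_2$ on $(A_2,B_2)$ (Bell states of each $\rho_k$, including $|\psi\rangle$ above, are taken in the ordering $(A_k,B_k)$); a Bell-state measurement on $(A_1,A_2)$ gives outcome $ij$ with probability $p'_{ij}(\rho_1\otimes\rho_2)=\mathrm{Tr}[|\Psi_{ij}\rangle\langle\Psi_{ij}|_{A_1A_2}\rho_1\otimes\rho_2]$,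 and the postselected end-to-end fidelity (after the Pauli correction $Z^jX^i$ on $B_2$) is $F'_{ij}(\rho_1\otimes\rho_2)=\frac{1}{p'_{ij}}\mathrm{Tr}[|\Psi_{ij}\rangle\langle\Psi_{ij}|_{B_1B_2}|\Psi_{ij}\rangle\langle\Psi_{ij}|_{A_1A_2}\rho_1\otimes\rho_2]$. *)

(* Defs.v *)
(* Complex scalars: an arbitrary numClosedFieldType C
   (e.g. complex R for a real closed field R; the complex numbers). *)
From HB Require Import structures.
From mathcomp Require Import all_boot all_order all_algebra.
Set Implicit Arguments.
Unset Strict Implicit.
Unset Printing Implicit Defensive.
Import Order.TTheory GRing.Theory Num.Theory.
Local Open Scope ring_scope.

Definition bitn (k j : nat) : nat := (k %/ 2 ^ j) %% 2.

Section Qubits.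
Variable C : numClosedFieldType.

Definition dag m n (M : 'M[C]_(m, n)) : 'M[C]_(n, m) := map_mx Num.conj (trmx M).

Definition PauliX : 'M[C]_2 := \matrix_(i, j) (i != j)%:R.
Definition PauliZ : 'M[C]_2 := \matrix_(i, j) (if i == j then (-1) ^+ (i : nat) else 0).

(* Two qubits (X,Y): basis index x : 'I_4 with x = 2*(value of X) + (value of Y).
   Kronecker product A (on X) (x) B (on Y). *)
Definition kron2 (A B : 'M[C]_2) : 'M[C]_4 :=
  \matrix_(x, y) (A (inord (bitn x 1)) (inord (bitn y 1)) *
                  B (inord (bitn x 0)) (inord (bitn y 0))).

(* (|00> + |11>)/sqrt 2 *)
Definition phiplus : 'cV[C]_4 :=
  \col_x (if bitn x 1 == bitn x 0 then (sqrtC 2)^-1 else 0).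

Definition Bell (i j : bool) : 'cV[C]_4 :=
  kron2 1%:M (PauliX ^+ i *m PauliZ ^+ j) *m phiplus.

Definition proj n (v : 'cV[C]_n) : 'M[C]_n := v *m dag v.

Definition density n (rho : 'M[C]_n) : Prop :=
  dag rho = rho /\ (forall v : 'cV[C]_n, 0 <= (dag v *m rho *m v) 0 0) /\ \tr rho = 1.

Definition S_pF (p F : C) (rho : 'M[C]_4) : Prop :=
  density rho /\
  (exists sigma : 'M[C]_4, density sigma /\
      rho = p *: proj (Bell false false) + (1 - p) *: sigma) /\
  (dag (Bell false false) *m rho *m Bell false false) 0 0 = F.

(* Four qubits ordered (A1,B1,A2,B2): index x : 'I_16 with
   A1 = bit 3, B1 = bit 2, A2 = bit 1, B2 = bit 0. *)
Definition sub2 (x : nat) (a b : nat) : 'I_4 := inord (2 * bitn x a + bitn x b).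

(* rho1 on (A1,B1) tensor rho2 on (A2,B2) *)
Definition tens (rho1 rho2 : 'M[C]_4) : 'M[C]_16 :=
  \matrix_(x, y) (rho1 (sub2 x 3 2) (sub2 y 3 2) * rho2 (sub2 x 1 0) (sub2 y 1 0)).

(* two-qubit operator P acting on (A1,A2), identity on B1,B2 *)
Definition onA (P : 'M[C]_4) : 'M[C]_16 :=
  \matrix_(x, y) (P (sub2 x 3 1) (sub2 y 3 1) *
                  ((bitn x 2 == bitn y 2) && (bitn x 0 == bitn y 0))%:R).

(* two-qubit operator P acting on (B1,B2), identity on A1,A2 *)
Definition onB (P : 'M[C]_4) : 'M[C]_16 :=
  \matrix_(x, y) (P (sub2 x 2 0) (sub2 y 2 0) *
                  ((bitn x 3 == bitn y 3) && (bitn x 1 == bitn y 1))%:R).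

Definition pswap (i j : bool) (Om : 'M[C]_16) : C :=
  \tr (onA (proj (Bell i j)) *m Om).

Definition Fswap (i j : bool) (Om : 'M[C]_16) : C :=
  (pswap i j Om)^-1 * \tr (onB (proj (Bell i j)) *m onA (proj (Bell i j)) *m Om).

(* v is the maximum of F'_00(rho1 (x) rho2) over rho1, rho2 in S_{p,F}
   (over the pairs for which the outcome 00 has nonzero probability) *)
Definition is_Fmax (p F v : C) : Prop :=
  (exists rho1 rho2, S_pF p F rho1 /\ S_pF p F rho2 /\
     0 < pswap false false (tens rho1 rho2) /\
     Fswap false false (tens rho1 rho2) = v) /\
  (forall rho1 rho2, S_pF p F rho1 -> S_pF p F rho2 ->
     0 < pswap false false (tens rho1 rho2) ->
     Fswap false false (tens rho1 rho2) <= v).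

Definition psi_opt (p F : C) : 'cV[C]_4 :=
  let Ft := (F - p) / (1 - p) in
  sqrtC Ft *: Bell false false + sqrtC (1 - Ft) *: Bell true true.

Definition rho_opt (p F : C) : 'M[C]_4 :=
  p *: proj (Bell false false) + (1 - p) *: proj (psi_opt p F).

End Qubits.

(* Main.v *)
Require Import Defs.
From HB Require Import structures.
From mathcomp Require Import all_boot all_order all_algebra.
From mathcomp Require Import sesquilinear spectral ring lra.
Import Order.TTheory GRing.Theory Num.Theory.
Local Open Scope ring_scope.

Lemma idx2_lt (a b : 'I_2) : (2 * a + b < 4)%N.
Proof. by case: a b => [[|[|//]] ?] [[|[|//]] ?]. Qed.
Definition idx2 (a b : 'I_2) : 'I_4 := Ordinal (idx2_lt a b).
Lemma idx4_lt (a b c d : 'I_2) : (8 * a + 4 * b + 2 * c + d < 16)%N.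
Proof. by case: a b c d => [[|[|//]] ?] [[|[|//]] ?] [[|[|//]] ?] [[|[|//]] ?]. Qed.
Definition idx4 (a b c d : 'I_2) : 'I_16 := Ordinal (idx4_lt a b c d).

Definition o0 : 'I_2 := @Ordinal 2 0 isT.
Definition o1 : 'I_2 := @Ordinal 2 1 isT.

Lemma ord2P (P : 'I_2 -> Prop) : P o0 -> P o1 -> forall a, P a.
Proof.
move=> H0 H1 [[|[|//]] H].
  by rewrite (_ : Ordinal H = o0) //; apply: val_inj.
by rewrite (_ : Ordinal H = o1) //; apply: val_inj.
Qed.

Lemma bit2_1 a b : bitn (idx2 a b) 1 = a.
Proof. by elim/ord2P: a; elim/ord2P: b. Qed.
Lemma bit2_0 a b : bitn (idx2 a b) 0 = b.
Proof. by elim/ord2P: a; elim/ord2P: b. Qed.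
Lemma bit4_3 a b c d : bitn (idx4 a b c d) 3 = a.
Proof. by elim/ord2P: a; elim/ord2P: b; elim/ord2P: c; elim/ord2P: d. Qed.
Lemma bit4_2 a b c d : bitn (idx4 a b c d) 2 = b.
Proof. by elim/ord2P: a; elim/ord2P: b; elim/ord2P: c; elim/ord2P: d. Qed.
Lemma bit4_1 a b c d : bitn (idx4 a b c d) 1 = c.
Proof. by elim/ord2P: a; elim/ord2P: b; elim/ord2P: c; elim/ord2P: d. Qed.
Lemma bit4_0 a b c d : bitn (idx4 a b c d) 0 = d.
Proof. by elim/ord2P: a; elim/ord2P: b; elim/ord2P: c; elim/ord2P: d. Qed.

Lemma sub2_idx x i j : sub2 x i j = idx2 (inord (bitn x i)) (inord (bitn x j)).
Proof.
have Hb : forall y k, (bitn y k < 2)%N by move=> y k; rewrite /bitn ltn_pmod.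
apply: val_inj; rewrite /sub2 /= !inordK //.
by have := Hb x i; have := Hb x j; case: (bitn x i) => [|[|//]]; case: (bitn x j) => [|[|//]].
Qed.

Lemma sub2_4_32 a b c d : sub2 (idx4 a b c d) 3 2 = idx2 a b.
Proof. by rewrite sub2_idx bit4_3 bit4_2 !inord_val. Qed.
Lemma sub2_4_10 a b c d : sub2 (idx4 a b c d) 1 0 = idx2 c d.
Proof. by rewrite sub2_idx bit4_1 bit4_0 !inord_val. Qed.
Lemma sub2_4_31 a b c d : sub2 (idx4 a b c d) 3 1 = idx2 a c.
Proof. by rewrite sub2_idx bit4_3 bit4_1 !inord_val. Qed.
Lemma sub2_4_20 a b c d : sub2 (idx4 a b c d) 2 0 = idx2 b d.
Proof. by rewrite sub2_idx bit4_2 bit4_0 !inord_val. Qed.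

Section SA.
Import Num.Def.
Set Implicit Arguments. Unset Strict Implicit. Unset Printing Implicit Defensive.

Variable C : numClosedFieldType.

Lemma sum2 (F : 'I_2 -> C) : \sum_i F i = F o0 + F o1.
Proof.
rewrite !big_ord_recl big_ord0 addr0 /=.
by congr (F _ + F _); apply: val_inj.
Qed.

Lemma sum2_8 (G : 'I_2 -> 'I_2 -> 'I_2 -> 'I_2 -> 'I_2 -> 'I_2 -> 'I_2 -> 'I_2 -> C) :
  \sum_x0 \sum_x1 \sum_x2 \sum_x3 \sum_x4 \sum_x5 \sum_x6 \sum_x7 G x0 x1 x2 x3 x4 x5 x6 x7 =
  ((((((((G o0 o0 o0 o0 o0 o0 o0 o0 + G o0 o0 o0 o0 o0 o0 o0 o1) + (G o0 o0 o0 o0 o0 o0 o1 o0 + G o0 o0 o0 o0 o0 o0 o1 o1)) + ((G o0 o0 o0 o0 o0 o1 o0 o0 + G o0 o0 o0 o0 o0 o1 o0 o1) + (G o0 o0 o0 o0 o0 o1 o1 o0 + G o0 o0 o0 o0 o0 o1 o1 o1))) + (((G o0 o0 o0 o0 o1 o0 o0 o0 + G o0 o0 o0 o0 o1 o0 o0 o1) + (G o0 o0 o0 o0 o1 o0 o1 o0 + G o0 o0 o0 o0 o1 o0 o1 o1)) + ((G o0 o0 o0 o0 o1 o1 o0 o0 + G o0 o0 o0 o0 o1 o1 o0 o1) + (G o0 o0 o0 o0 o1 o1 o1 o0 + G o0 o0 o0 o0 o1 o1 o1 o1)))) + ((((G o0 o0 o0 o1 o0 o0 o0 o0 + G o0 o0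 o0 o1 o0 o0 o0 o1) + (G o0 o0 o0 o1 o0 o0 o1 o0 + G o0 o0 o0 o1 o0 o0 o1 o1)) + ((G o0 o0 o0 o1 o0 o1 o0 o0 + G o0 o0 o0 o1 o0 o1 o0 o1) + (G o0 o0 o0 o1 o0 o1 o1 o0 + G o0 o0 o0 o1 o0 o1 o1 o1))) + (((G o0 o0 o0 o1 o1 o0 o0 o0 + G o0 o0 o0 o1 o1 o0 o0 o1) + (G o0 o0 o0 o1 o1 o0 o1 o0 + G o0 o0 o0 o1 o1 o0 o1 o1)) + ((G o0 o0 o0 o1 o1 o1 o0 o0 + G o0 o0 o0 o1 o1 o1 o0 o1) + (G o0 o0 o0 o1 o1 o1 o1 o0 + G o0 o0 o0 o1 o1 o1 o1 o1))))) + (((((G o0 o0 o1 o0 o0 o0 o0 o0 + G o0 o0 o1 o0 o0 o0 o0 o1) + (G o0 o0 o1 o0 o0 o0 o1 o0 + G o0 o0 o1 o0 o0 o0 o1 o1)) + ((G o0 o0 o1 o0 o0 o1 o0 o0 + G o0 o0 o1 o0 o0 o1 o0 o1) + (G o0 o0 o1 o0 o0 o1 o1 o0 + G o0 o0 o1 o0 o0 o1 o1 o1))) + (((G o0 o0 o1 o0 o1 o0 o0 o0 + G o0 o0 o1 o0 o1 o0 o0 o1) + (G o0 o0 o1 o0 o1 o0 o1 o0 + G o0 o0 o1 o0 o1 o0 o1 o1)) + ((G o0 o0 o1 o0 o1 o1 o0 o0 + G o0 o0 o1 o0 o1 o1 o0 o1) + (G o0 o0 o1 o0 o1 o1 o1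 o0 + G o0 o0 o1 o0 o1 o1 o1 o1)))) + ((((G o0 o0 o1 o1 o0 o0 o0 o0 + G o0 o0 o1 o1 o0 o0 o0 o1) + (G o0 o0 o1 o1 o0 o0 o1 o0 + G o0 o0 o1 o1 o0 o0 o1 o1)) + ((G o0 o0 o1 o1 o0 o1 o0 o0 + G o0 o0 o1 o1 o0 o1 o0 o1) + (G o0 o0 o1 o1 o0 o1 o1 o0 + G o0 o0 o1 o1 o0 o1 o1 o1))) + (((G o0 o0 o1 o1 o1 o0 o0 o0 + G o0 o0 o1 o1 o1 o0 o0 o1) + (G o0 o0 o1 o1 o1 o0 o1 o0 + G o0 o0 o1 o1 o1 o0 o1 o1)) + ((G o0 o0 o1 o1 o1 o1 o0 o0 + G o0 o0 o1 o1 o1 o1 o0 o1) + (G o0 o0 o1 o1 o1 o1 o1 o0 + G o0 o0 o1 o1 o1 o1 o1 o1)))))) + ((((((G o0 o1 o0 o0 o0 o0 o0 o0 + G o0 o1 o0 o0 o0 o0 o0 o1) + (G o0 o1 o0 o0 o0 o0 o1 o0 + G o0 o1 o0 o0 o0 o0 o1 o1)) + ((G o0 o1 o0 o0 o0 o1 o0 o0 + G o0 o1 o0 o0 o0 o1 o0 o1) + (G o0 o1 o0 o0 o0 o1 o1 o0 + G o0 o1 o0 o0 o0 o1 o1 o1))) + (((G o0 o1 o0 o0 o1 o0 o0 o0 + G o0 o1 o0 o0 o1 o0 o0 o1) + (G o0 o1 o0 o0 o1 o0 o1 o0 + G o0 o1 o0 o0 o1 o0 o1 o1)) + ((G o0 o1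 o0 o0 o1 o1 o0 o0 + G o0 o1 o0 o0 o1 o1 o0 o1) + (G o0 o1 o0 o0 o1 o1 o1 o0 + G o0 o1 o0 o0 o1 o1 o1 o1)))) + ((((G o0 o1 o0 o1 o0 o0 o0 o0 + G o0 o1 o0 o1 o0 o0 o0 o1) + (G o0 o1 o0 o1 o0 o0 o1 o0 + G o0 o1 o0 o1 o0 o0 o1 o1)) + ((G o0 o1 o0 o1 o0 o1 o0 o0 + G o0 o1 o0 o1 o0 o1 o0 o1) + (G o0 o1 o0 o1 o0 o1 o1 o0 + G o0 o1 o0 o1 o0 o1 o1 o1))) + (((G o0 o1 o0 o1 o1 o0 o0 o0 + G o0 o1 o0 o1 o1 o0 o0 o1) + (G o0 o1 o0 o1 o1 o0 o1 o0 + G o0 o1 o0 o1 o1 o0 o1 o1)) + ((G o0 o1 o0 o1 o1 o1 o0 o0 + G o0 o1 o0 o1 o1 o1 o0 o1) + (G o0 o1 o0 o1 o1 o1 o1 o0 + G o0 o1 o0 o1 o1 o1 o1 o1))))) + (((((G o0 o1 o1 o0 o0 o0 o0 o0 + G o0 o1 o1 o0 o0 o0 o0 o1) + (G o0 o1 o1 o0 o0 o0 o1 o0 + G o0 o1 o1 o0 o0 o0 o1 o1)) + ((G o0 o1 o1 o0 o0 o1 o0 o0 + G o0 o1 o1 o0 o0 o1 o0 o1) + (G o0 o1 o1 o0 o0 o1 o1 o0 + G o0 o1 o1 o0 o0 o1 o1 o1))) + (((G o0 o1 o1 o0 o1 o0 o0 o0 + G o0 o1 o1 o0 o1 o0 o0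 o1) + (G o0 o1 o1 o0 o1 o0 o1 o0 + G o0 o1 o1 o0 o1 o0 o1 o1)) + ((G o0 o1 o1 o0 o1 o1 o0 o0 + G o0 o1 o1 o0 o1 o1 o0 o1) + (G o0 o1 o1 o0 o1 o1 o1 o0 + G o0 o1 o1 o0 o1 o1 o1 o1)))) + ((((G o0 o1 o1 o1 o0 o0 o0 o0 + G o0 o1 o1 o1 o0 o0 o0 o1) + (G o0 o1 o1 o1 o0 o0 o1 o0 + G o0 o1 o1 o1 o0 o0 o1 o1)) + ((G o0 o1 o1 o1 o0 o1 o0 o0 + G o0 o1 o1 o1 o0 o1 o0 o1) + (G o0 o1 o1 o1 o0 o1 o1 o0 + G o0 o1 o1 o1 o0 o1 o1 o1))) + (((G o0 o1 o1 o1 o1 o0 o0 o0 + G o0 o1 o1 o1 o1 o0 o0 o1) + (G o0 o1 o1 o1 o1 o0 o1 o0 + G o0 o1 o1 o1 o1 o0 o1 o1)) + ((G o0 o1 o1 o1 o1 o1 o0 o0 + G o0 o1 o1 o1 o1 o1 o0 o1) + (G o0 o1 o1 o1 o1 o1 o1 o0 + G o0 o1 o1 o1 o1 o1 o1 o1))))))) + (((((((G o1 o0 o0 o0 o0 o0 o0 o0 + G o1 o0 o0 o0 o0 o0 o0 o1) + (G o1 o0 o0 o0 o0 o0 o1 o0 + G o1 o0 o0 o0 o0 o0 o1 o1)) + ((G o1 o0 o0 o0 o0 o1 o0 o0 + G o1 o0 o0 o0 o0 o1 o0 o1) + (G o1 o0 o0 o0 o0 o1 o1 o0 + G o1 o0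 o0 o0 o0 o1 o1 o1))) + (((G o1 o0 o0 o0 o1 o0 o0 o0 + G o1 o0 o0 o0 o1 o0 o0 o1) + (G o1 o0 o0 o0 o1 o0 o1 o0 + G o1 o0 o0 o0 o1 o0 o1 o1)) + ((G o1 o0 o0 o0 o1 o1 o0 o0 + G o1 o0 o0 o0 o1 o1 o0 o1) + (G o1 o0 o0 o0 o1 o1 o1 o0 + G o1 o0 o0 o0 o1 o1 o1 o1)))) + ((((G o1 o0 o0 o1 o0 o0 o0 o0 + G o1 o0 o0 o1 o0 o0 o0 o1) + (G o1 o0 o0 o1 o0 o0 o1 o0 + G o1 o0 o0 o1 o0 o0 o1 o1)) + ((G o1 o0 o0 o1 o0 o1 o0 o0 + G o1 o0 o0 o1 o0 o1 o0 o1) + (G o1 o0 o0 o1 o0 o1 o1 o0 + G o1 o0 o0 o1 o0 o1 o1 o1))) + (((G o1 o0 o0 o1 o1 o0 o0 o0 + G o1 o0 o0 o1 o1 o0 o0 o1) + (G o1 o0 o0 o1 o1 o0 o1 o0 + G o1 o0 o0 o1 o1 o0 o1 o1)) + ((G o1 o0 o0 o1 o1 o1 o0 o0 + G o1 o0 o0 o1 o1 o1 o0 o1) + (G o1 o0 o0 o1 o1 o1 o1 o0 + G o1 o0 o0 o1 o1 o1 o1 o1))))) + (((((G o1 o0 o1 o0 o0 o0 o0 o0 + G o1 o0 o1 o0 o0 o0 o0 o1) + (G o1 o0 o1 o0 o0 o0 o1 o0 + G o1 o0 o1 o0 o0 o0 o1 o1)) + ((G o1 o0 o1 o0 o0 o1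 o0 o0 + G o1 o0 o1 o0 o0 o1 o0 o1) + (G o1 o0 o1 o0 o0 o1 o1 o0 + G o1 o0 o1 o0 o0 o1 o1 o1))) + (((G o1 o0 o1 o0 o1 o0 o0 o0 + G o1 o0 o1 o0 o1 o0 o0 o1) + (G o1 o0 o1 o0 o1 o0 o1 o0 + G o1 o0 o1 o0 o1 o0 o1 o1)) + ((G o1 o0 o1 o0 o1 o1 o0 o0 + G o1 o0 o1 o0 o1 o1 o0 o1) + (G o1 o0 o1 o0 o1 o1 o1 o0 + G o1 o0 o1 o0 o1 o1 o1 o1)))) + ((((G o1 o0 o1 o1 o0 o0 o0 o0 + G o1 o0 o1 o1 o0 o0 o0 o1) + (G o1 o0 o1 o1 o0 o0 o1 o0 + G o1 o0 o1 o1 o0 o0 o1 o1)) + ((G o1 o0 o1 o1 o0 o1 o0 o0 + G o1 o0 o1 o1 o0 o1 o0 o1) + (G o1 o0 o1 o1 o0 o1 o1 o0 + G o1 o0 o1 o1 o0 o1 o1 o1))) + (((G o1 o0 o1 o1 o1 o0 o0 o0 + G o1 o0 o1 o1 o1 o0 o0 o1) + (G o1 o0 o1 o1 o1 o0 o1 o0 + G o1 o0 o1 o1 o1 o0 o1 o1)) + ((G o1 o0 o1 o1 o1 o1 o0 o0 + G o1 o0 o1 o1 o1 o1 o0 o1) + (G o1 o0 o1 o1 o1 o1 o1 o0 + G o1 o0 o1 o1 o1 o1 o1 o1)))))) + ((((((G o1 o1 o0 o0 o0 o0 o0 o0 + G o1 o1 o0 o0 o0 o0 o0 o1) + (G o1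 o1 o0 o0 o0 o0 o1 o0 + G o1 o1 o0 o0 o0 o0 o1 o1)) + ((G o1 o1 o0 o0 o0 o1 o0 o0 + G o1 o1 o0 o0 o0 o1 o0 o1) + (G o1 o1 o0 o0 o0 o1 o1 o0 + G o1 o1 o0 o0 o0 o1 o1 o1))) + (((G o1 o1 o0 o0 o1 o0 o0 o0 + G o1 o1 o0 o0 o1 o0 o0 o1) + (G o1 o1 o0 o0 o1 o0 o1 o0 + G o1 o1 o0 o0 o1 o0 o1 o1)) + ((G o1 o1 o0 o0 o1 o1 o0 o0 + G o1 o1 o0 o0 o1 o1 o0 o1) + (G o1 o1 o0 o0 o1 o1 o1 o0 + G o1 o1 o0 o0 o1 o1 o1 o1)))) + ((((G o1 o1 o0 o1 o0 o0 o0 o0 + G o1 o1 o0 o1 o0 o0 o0 o1) + (G o1 o1 o0 o1 o0 o0 o1 o0 + G o1 o1 o0 o1 o0 o0 o1 o1)) + ((G o1 o1 o0 o1 o0 o1 o0 o0 + G o1 o1 o0 o1 o0 o1 o0 o1) + (G o1 o1 o0 o1 o0 o1 o1 o0 + G o1 o1 o0 o1 o0 o1 o1 o1))) + (((G o1 o1 o0 o1 o1 o0 o0 o0 + G o1 o1 o0 o1 o1 o0 o0 o1) + (G o1 o1 o0 o1 o1 o0 o1 o0 + G o1 o1 o0 o1 o1 o0 o1 o1)) + ((G o1 o1 o0 o1 o1 o1 o0 o0 + G o1 o1 o0 o1 o1 o1 o0 o1) + (G o1 o1 o0 o1 o1 o1 o1 o0 + G o1 o1 o0 o1 o1 o1 o1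 o1))))) + (((((G o1 o1 o1 o0 o0 o0 o0 o0 + G o1 o1 o1 o0 o0 o0 o0 o1) + (G o1 o1 o1 o0 o0 o0 o1 o0 + G o1 o1 o1 o0 o0 o0 o1 o1)) + ((G o1 o1 o1 o0 o0 o1 o0 o0 + G o1 o1 o1 o0 o0 o1 o0 o1) + (G o1 o1 o1 o0 o0 o1 o1 o0 + G o1 o1 o1 o0 o0 o1 o1 o1))) + (((G o1 o1 o1 o0 o1 o0 o0 o0 + G o1 o1 o1 o0 o1 o0 o0 o1) + (G o1 o1 o1 o0 o1 o0 o1 o0 + G o1 o1 o1 o0 o1 o0 o1 o1)) + ((G o1 o1 o1 o0 o1 o1 o0 o0 + G o1 o1 o1 o0 o1 o1 o0 o1) + (G o1 o1 o1 o0 o1 o1 o1 o0 + G o1 o1 o1 o0 o1 o1 o1 o1)))) + ((((G o1 o1 o1 o1 o0 o0 o0 o0 + G o1 o1 o1 o1 o0 o0 o0 o1) + (G o1 o1 o1 o1 o0 o0 o1 o0 + G o1 o1 o1 o1 o0 o0 o1 o1)) + ((G o1 o1 o1 o1 o0 o1 o0 o0 + G o1 o1 o1 o1 o0 o1 o0 o1) + (G o1 o1 o1 o1 o0 o1 o1 o0 + G o1 o1 o1 o1 o0 o1 o1 o1))) + (((G o1 o1 o1 o1 o1 o0 o0 o0 + G o1 o1 o1 o1 o1 o0 o0 o1) + (G o1 o1 o1 o1 o1 o0 o1 o0 + G o1 o1 o1 o1 o1 o0 o1 o1)) + ((G o1 o1 o1 o1 o1 o1 o0 o0 + G o1 o1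 o1 o1 o1 o1 o0 o1) + (G o1 o1 o1 o1 o1 o1 o1 o0 + G o1 o1 o1 o1 o1 o1 o1 o1)))))))).
Proof. by rewrite !sum2. Qed.

Lemma sum2_4 (G : 'I_2 -> 'I_2 -> 'I_2 -> 'I_2 -> C) :
  \sum_x0 \sum_x1 \sum_x2 \sum_x3 G x0 x1 x2 x3 =
  ((((G o0 o0 o0 o0 + G o0 o0 o0 o1) + (G o0 o0 o1 o0 + G o0 o0 o1 o1)) + ((G o0 o1 o0 o0 + G o0 o1 o0 o1) + (G o0 o1 o1 o0 + G o0 o1 o1 o1))) + (((G o1 o0 o0 o0 + G o1 o0 o0 o1) + (G o1 o0 o1 o0 + G o1 o0 o1 o1)) + ((G o1 o1 o0 o0 + G o1 o1 o0 o1) + (G o1 o1 o1 o0 + G o1 o1 o1 o1)))).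
Proof. by rewrite !sum2. Qed.

Lemma sum4 (F : 'I_4 -> C) : \sum_i F i = \sum_a \sum_b F (idx2 a b).
Proof.
rewrite !big_ord_recl !big_ord0 !addr0 /= !addrA.
by congr (F _ + F _ + F _ + F _); apply: val_inj.
Qed.

Lemma split_sum m n (F : 'I_(m+n) -> C) :
  \sum_i F i = \sum_i F (lshift n i) + \sum_i F (rshift m i).
Proof. exact: big_split_ord. Qed.

Lemma sum16 (F : 'I_16 -> C) : \sum_i F i = \sum_a \sum_b \sum_c \sum_d F (idx4 a b c d).
Proof.
rewrite [RHS]sum2 !sum2.
rewrite (@split_sum 8 8) (@split_sum 4 4) (@split_sum 4 4).
do 4 rewrite (@split_sum 2 2).
do 8 rewrite (@split_sum 1 1).
rewrite !big_ord1 !addrA.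
repeat first [congr (_ + _) | (congr F; exact: val_inj)].
Qed.

Lemma kron2E (A B : 'M[C]_2) a b a' b' : kron2 A B (idx2 a b) (idx2 a' b') = A a a' * B b b'.
Proof. by rewrite mxE !bit2_1 !bit2_0 !inord_val. Qed.

Lemma tensE (r1 r2 : 'M[C]_4) a b c d a' b' c' d' :
  tens r1 r2 (idx4 a b c d) (idx4 a' b' c' d') = r1 (idx2 a b) (idx2 a' b') * r2 (idx2 c d) (idx2 c' d').
Proof. by rewrite mxE !sub2_4_32 !sub2_4_10. Qed.

Lemma onAE (Q : 'M[C]_4) a b c d a' b' c' d' :
  onA Q (idx4 a b c d) (idx4 a' b' c' d') = Q (idx2 a c) (idx2 a' c') * ((b == b' :> nat) && (d == d' :> nat))%:R.
Proof. by rewrite mxE !sub2_4_31 !bit4_2 !bit4_0. Qed.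

Lemma onBE (Q : 'M[C]_4) a b c d a' b' c' d' :
  onB Q (idx4 a b c d) (idx4 a' b' c' d') = Q (idx2 b d) (idx2 b' d') * ((a == a' :> nat) && (c == c' :> nat))%:R.
Proof. by rewrite mxE !sub2_4_20 !bit4_3 !bit4_1. Qed.

Local Notation s2 := ((sqrtC (2:C))^-1).

Lemma Bell00E a b : Bell C false false (idx2 a b) 0 = (a == b :> nat)%:R * s2.
Proof.
rewrite /Bell mxE sum4 expr0 expr0 mulmx1.
elim/ord2P: a; elim/ord2P: b; rewrite !sum2 !kron2E !mxE !bit2_1 !bit2_0 /=; ring.
Qed.

Lemma Bell11E a b : Bell C true true (idx2 a b) 0 =
   (((a == 0%N :> nat) && (b == 1%N :> nat))%:R - ((a == 1%N :> nat) && (b == 0%N :> nat))%:R) * s2.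
Proof.
rewrite /Bell mxE sum4 expr1 expr1.
elim/ord2P: a; elim/ord2P: b; rewrite !sum2 !kron2E !mxE !sum2 !mxE !bit2_1 !bit2_0 /=; ring.
Qed.


Lemma s2_conj : s2^* = s2.
Proof. by rewrite fmorphV; congr (_^-1); apply/CrealP/ger0_real; rewrite sqrtC_ge0 ler0n. Qed.

Lemma s2s2 : s2 * s2 = 2^-1.
Proof. by rewrite -invfM -expr2 sqrtCK. Qed.

Definition Phi := proj (Bell C false false).

Lemma projE n (v : 'cV[C]_n) i j : proj v i j = v i 0 * (v j 0)^*.
Proof. by rewrite /proj mxE big_ord1 !mxE. Qed.

Lemma PhiE a b a' b' : Phi (idx2 a b) (idx2 a' b') = ((a == b :> nat) && (a' == b' :> nat))%:R / 2.
Proof.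
rewrite /Phi projE !Bell00E rmorphM /= s2_conj conjC_nat mulrACA s2s2.
by elim/ord2P: a; elim/ord2P: b; elim/ord2P: a'; elim/ord2P: b'; rewrite /=; ring.
Qed.

Definition Df (r1 r2 : 'M[C]_4) := \sum_a \sum_a' (\sum_b r1 (idx2 a b) (idx2 a' b)) * (\sum_d r2 (idx2 a d) (idx2 a' d)).
Definition Nf (r1 r2 : 'M[C]_4) := \sum_a \sum_b \sum_a' \sum_b' r1 (idx2 a b) (idx2 a' b') * r2 (idx2 a b) (idx2 a' b').

Lemma tr16 (A B : 'M[C]_16) : \tr (A *m B) = \sum_a \sum_b \sum_c \sum_d \sum_a' \sum_b' \sum_c' \sum_d'
   A (idx4 a b c d) (idx4 a' b' c' d') * B (idx4 a' b' c' d') (idx4 a b c d).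
Proof.
rewrite /mxtrace sum16; do 4 (apply: eq_bigr => ? _).
by rewrite mxE sum16.
Qed.



Lemma eqCC (x y : C) : x = y -> x = y. Proof. by []. Qed.

Lemma KE (P Q : 'M[C]_4) a b c d a' b' c' d' :
  (onB P *m onA Q) (idx4 a b c d) (idx4 a' b' c' d') = P (idx2 b d) (idx2 b' d') * Q (idx2 a c) (idx2 a' c').
Proof.
rewrite mxE sum16.
under eq_bigr => x _ do under eq_bigr => y _ do under eq_bigr => z _ do under eq_bigr => w _ do
  rewrite onBE onAE.
rewrite sum2_4.
by elim/ord2P: a; elim/ord2P: c; elim/ord2P: b'; elim/ord2P: d'; rewrite /=; ring.
Qed.

Lemma pswapE (r1 r2 : 'M[C]_4) : pswap false false (tens r1 r2) = Df r1 r2 / 2.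
Proof.
rewrite /pswap tr16.
under eq_bigr => a _ do under eq_bigr => b _ do under eq_bigr => c _ do under eq_bigr => d _ do
  under eq_bigr => a' _ do under eq_bigr => b' _ do under eq_bigr => c' _ do under eq_bigr => d' _ do
  rewrite onAE tensE -/Phi PhiE.
rewrite sum2_8 /Df !sum2 /=.
field; do ?split; by rewrite pnatr_eq0.
Qed.

End SA.


Section SB.
Import Num.Def.
Set Implicit Arguments. Unset Strict Implicit. Unset Printing Implicit Defensive.

Variable C : numClosedFieldType.
Local Notation Phi := (Phi C).
Lemma numE (r1 r2 : 'M[C]_4) :
  \tr (onB Phi *m onA Phi *m tens r1 r2) = Nf r1 r2 / 4.
Proof.
refine (@eqCC C _ _ _); rewrite tr16.
under eq_bigr => a _ do under eq_bigr => b _ do under eq_bigr => c _ do under eq_bigr => d _ do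
  under eq_bigr => a' _ do under eq_bigr => b' _ do under eq_bigr => c' _ do under eq_bigr => d' _ do
  rewrite KE tensE !PhiE.
rewrite sum2_8 /Nf sum2_4 /=.
field; do ?split; by rewrite pnatr_eq0.
Qed.


End SB.


Section SD.
Import Num.Def.
Set Implicit Arguments. Unset Strict Implicit. Unset Printing Implicit Defensive.
Local Open Scope sesquilinear_scope.

Variable C : numClosedFieldType.
Local Notation "x ^*" := (Num.conj x).

Lemma dagE m n (M : 'M[C]_(m,n)) : dag M = M ^t conjC.
Proof. by []. Qed.

Lemma dagM m n p (A : 'M[C]_(m,n)) (B : 'M[C]_(n,p)) : dag (A *m B) = dag B *m dag A.
Proof. by rewrite /dag trmx_mul map_mxM. Qed.

Lemma psd_decomp (s : 'M[C]_4) : dag s = s ->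
  (forall v : 'cV[C]_4, 0 <= (dag v *m s *m v) 0 0) ->
  exists W : 'M[C]_4, forall i j, s i j = \sum_k W i k * (W j k)^*.
Proof.
move=> Hh Hp.
have Hn : s \is normalmx by rewrite qualifE -dagE Hh.
move/orthomx_spectralP: Hn.
set P := spectralmx s; set X := spectral_diag s.
have Pu : P \is unitarymx by apply: spectral_unitarymx.
rewrite invmx_unitary // => Hs.
have PP : P *m P^t* = 1%:M by apply/unitarymxP.
have X0 : forall k, 0 <= X 0 k.
  move=> k; have := Hp (P ^t* *m delta_mx k 0).
  have dK : dag (P ^t* ) = P by rewrite dagE trmxCK.
  rewrite dagM dK Hs !mulmxA.
  have -> : dag (delta_mx k 0) *m P *m P^t* = dag (delta_mx k 0 : 'cV[C]_4) by rewrite -mulmxA PP mulmx1.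
  rewrite -[_ *m P *m P^t*]mulmxA PP mulmx1.
  rewrite mxE (bigD1 k) //= big1 ?addr0; last first.
    by move=> l lk; rewrite [delta_mx k 0 l 0]mxE (negbTE lk) /= mulr0.
  rewrite mxE (bigD1 k) //= big1 ?addr0; last first.
    by move=> m mk; rewrite [diag_mx X m k]mxE (negbTE mk) /= mulr0.
  by rewrite !mxE !eqxx /= conjC1 mul1r mulr1 mulr1n.
exists (\matrix_(i, k) (sqrtC (X 0 k) * (P k i)^*)) => i j.
rewrite Hs !mxE; apply: eq_bigr => k _.
rewrite mxE (bigD1 k) //= big1 ?addr0; last first.
  by move=> m mk; rewrite [diag_mx X m k]mxE (negbTE mk) /= mulr0.
rewrite !mxE eqxx mulr1n.
have Hr : (sqrtC (X 0 k))^* = sqrtC (X 0 k).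
  by apply/CrealP; apply: ger0_real; rewrite sqrtC_ge0.
rewrite rmorphM /= Hr conjCK.
rewrite -{1}(sqrtCK (X 0 k)) expr2; ring.
Qed.
End SD.


Section SC.
Import Num.Def.
Set Implicit Arguments. Unset Strict Implicit. Unset Printing Implicit Defensive.

Variable C : numClosedFieldType.
Local Notation Phi := (Phi C).
Local Notation s2 := ((sqrtC (2:C))^-1).

Definition fid (r : 'M[C]_4) := (\sum_a \sum_a' r (idx2 a a) (idx2 a' a')) / 2.
Definition tr4 (r : 'M[C]_4) := \sum_a \sum_b r (idx2 a b) (idx2 a b).

Lemma mixE (A B : 'M[C]_4) p q i j : (p *: A + q *: B) i j = p * A i j + q * B i j.
Proof. by rewrite !mxE. Qed.

Lemma Nf_mix p (s1 s2 : 'M[C]_4) :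
  Nf (p *: Phi + (1 - p) *: s1) (p *: Phi + (1 - p) *: s2) =
  p ^+ 2 + p * ((1 - p) * fid s1) + p * ((1 - p) * fid s2) + (1 - p) ^+ 2 * Nf s1 s2.
Proof.
rewrite /Nf /fid !sum2_4 !sum2 !mixE !PhiE /=.
by field; do ?split; rewrite pnatr_eq0.
Qed.

Lemma Df_mix p (s1 s2 : 'M[C]_4) :
  Df (p *: Phi + (1 - p) *: s1) (p *: Phi + (1 - p) *: s2) =
  p ^+ 2 / 2 + p * (1 - p) * (tr4 s1 + tr4 s2) / 2 + (1 - p) ^+ 2 * Df s1 s2.
Proof.
rewrite /Df /tr4 !sum2 !mixE !PhiE /=.
by field; do ?split; rewrite pnatr_eq0.
Qed.

Lemma fid_mix p (s : 'M[C]_4) : fid (p *: Phi + (1 - p) *: s) = p + (1 - p) * fid s.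
Proof.
rewrite /fid !sum2 !mixE !PhiE /=.
by field; do ?split; rewrite pnatr_eq0.
Qed.

Lemma quadE n (v : 'cV[C]_n) (r : 'M[C]_n) :
  (dag v *m r *m v) 0 0 = \sum_i \sum_j (v i 0)^* * r i j * v j 0.
Proof.
rewrite mxE exchange_big /=; apply: eq_bigr => j _.
rewrite mxE mulr_suml; apply: eq_bigr => i _.
by rewrite !mxE.
Qed.

Lemma fidE (r : 'M[C]_4) : (dag (Bell C false false) *m r *m Bell C false false) 0 0 = fid r.
Proof.
rewrite quadE sum4 /fid.
under eq_bigr => a _ do under eq_bigr => b _ do rewrite sum4.
rewrite !sum2_4 !sum2 !Bell00E /= !rmorphM /= s2_conj ?rmorph0 ?conjC_nat -s2s2.
ring.
Qed.

Definition pm (u : 'I_4 -> C) : 'M[C]_4 := \matrix_(i, j) (u i * (u j)^*).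
Definition sq (x : C) := x * x^*.
Definition Mx (u v : 'I_4 -> C) (b d : 'I_2) := \sum_a u (idx2 a b) * v (idx2 a d).

Lemma sq_ge0 x : 0 <= sq x.
Proof. exact: mul_conjC_ge0. Qed.

Lemma DfDl (A B M : 'M[C]_4) : Df (A + B) M = Df A M + Df B M.
Proof. rewrite /Df !sum2 !mxE; ring. Qed.
Lemma DfDr (A B M : 'M[C]_4) : Df M (A + B) = Df M A + Df M B.
Proof. rewrite /Df !sum2 !mxE; ring. Qed.
Lemma Df0l (M : 'M[C]_4) : Df 0 M = 0.
Proof. rewrite /Df !sum2 !mxE; ring. Qed.
Lemma Df0r (M : 'M[C]_4) : Df M 0 = 0.
Proof. rewrite /Df !sum2 !mxE; ring. Qed.
Lemma NfDl (A B M : 'M[C]_4) : Nf (A + B) M = Nf A M + Nf B M.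
Proof. rewrite /Nf !sum2_4 !mxE; ring. Qed.
Lemma NfDr (A B M : 'M[C]_4) : Nf M (A + B) = Nf M A + Nf M B.
Proof. rewrite /Nf !sum2_4 !mxE; ring. Qed.
Lemma Nf0l (M : 'M[C]_4) : Nf 0 M = 0.
Proof. rewrite /Nf !sum2_4 !mxE; ring. Qed.
Lemma Nf0r (M : 'M[C]_4) : Nf M 0 = 0.
Proof. rewrite /Nf !sum2_4 !mxE; ring. Qed.
Lemma tr4D (A B : 'M[C]_4) : tr4 (A + B) = tr4 A + tr4 B.
Proof. rewrite /tr4 !sum2 !mxE; ring. Qed.
Lemma tr40 : tr4 (0 : 'M[C]_4) = 0.
Proof. rewrite /tr4 !sum2 !mxE; ring. Qed.
Lemma tr40_old : tr4 (0 : 'M[C]_4) = 0.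
Proof. rewrite /tr4 !sum2 !mxE; ring. Qed.

Lemma Df_sum (I : finType) (F G : I -> 'M[C]_4) :
  Df (\sum_k F k) (\sum_l G l) = \sum_k \sum_l Df (F k) (G l).
Proof.
rewrite (big_morph (fun A => Df A _) (fun x y => DfDl x y _) (Df0l _)).
apply: eq_bigr => k _.
exact: (big_morph (fun A => Df _ A) (fun x y => DfDr x y _) (Df0r _)).
Qed.

Lemma Nf_sum (I : finType) (F G : I -> 'M[C]_4) :
  Nf (\sum_k F k) (\sum_l G l) = \sum_k \sum_l Nf (F k) (G l).
Proof.
rewrite (big_morph (fun A => Nf A _) (fun x y => NfDl x y _) (Nf0l _)).
apply: eq_bigr => k _.
exact: (big_morph (fun A => Nf _ A) (fun x y => NfDr x y _) (Nf0r _)).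
Qed.

Lemma tr4_sum (I : finType) (F : I -> 'M[C]_4) : tr4 (\sum_k F k) = \sum_k tr4 (F k).
Proof. exact: (big_morph tr4 tr4D tr40). Qed.

Lemma pure_D u v : 2 * Df (pm u) (pm v) - Nf (pm u) (pm v) =
  2 * sq (Mx u v o0 o1) + 2 * sq (Mx u v o1 o0) + sq (Mx u v o0 o0 - Mx u v o1 o1).
Proof.
rewrite /Df /Nf /Mx /sq !sum2_4 !sum2 !mxE ?rmorphD ?rmorphB ?rmorphM.
ring.
Qed.

Lemma pure_T u v : tr4 (pm u) * tr4 (pm v) - Nf (pm u) (pm v) =
  sq (u (idx2 o0 o0) * (v (idx2 o0 o1))^* - u (idx2 o0 o1) * (v (idx2 o0 o0))^*) + sq (u (idx2 o0 o0) * (v (idx2 o1 o0))^* - u (idx2 o1 o0) * (v (idx2 o0 o0))^*) +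
  sq (u (idx2 o0 o0) * (v (idx2 o1 o1))^* - u (idx2 o1 o1) * (v (idx2 o0 o0))^*) + sq (u (idx2 o0 o1) * (v (idx2 o1 o0))^* - u (idx2 o1 o0) * (v (idx2 o0 o1))^*) +
  sq (u (idx2 o0 o1) * (v (idx2 o1 o1))^* - u (idx2 o1 o1) * (v (idx2 o0 o1))^*) + sq (u (idx2 o1 o0) * (v (idx2 o1 o1))^* - u (idx2 o1 o1) * (v (idx2 o1 o0))^*).
Proof.
rewrite /tr4 /Nf /sq !sum2_4 !sum2 !mxE /= ?rmorphB ?rmorphM /= ?conjCK.
ring.
Qed.

Lemma decomp_sum (s : 'M[C]_4) (W : 'M[C]_4) :
  (forall i j, s i j = \sum_k W i k * (W j k)^*) -> s = \sum_k pm (fun i => W i k).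
Proof.
move=> H; apply/matrixP => i j; rewrite H summxE.
by apply: eq_bigr => k _; rewrite mxE.
Qed.

Lemma psd_sum (s : 'M[C]_4) : dag s = s ->
  (forall v : 'cV[C]_4, 0 <= (dag v *m s *m v) 0 0) ->
  exists W : 'M[C]_4, s = \sum_k pm (fun i => W i k).
Proof.
move=> H1 H2; have [W HW] := psd_decomp H1 H2.
by exists W; apply: decomp_sum.
Qed.

Lemma keyD (W Z : 'M[C]_4) :
  0 <= 2 * Df (\sum_k pm (fun i => W i k)) (\sum_l pm (fun i => Z i l))
       - Nf (\sum_k pm (fun i => W i k)) (\sum_l pm (fun i => Z i l)).
Proof.
rewrite Df_sum Nf_sum mulr_sumr -sumrB; apply: sumr_ge0 => k _.
rewrite mulr_sumr -sumrB; apply: sumr_ge0 => l _.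
rewrite pure_D; apply: addr_ge0; [apply: addr_ge0; apply: mulr_ge0; rewrite ?ler0n ?sq_ge0 // | exact: sq_ge0].
Qed.

Lemma keyT (W Z : 'M[C]_4) :
  0 <= tr4 (\sum_k pm (fun i => W i k)) * tr4 (\sum_l pm (fun i => Z i l))
       - Nf (\sum_k pm (fun i => W i k)) (\sum_l pm (fun i => Z i l)).
Proof.
rewrite Nf_sum !tr4_sum mulr_suml -sumrB; apply: sumr_ge0 => k _.
rewrite mulr_sumr -sumrB; apply: sumr_ge0 => l _.
by rewrite pure_T !addr_ge0 ?sq_ge0.
Qed.

End SC.


Section SE.
Import Num.Def.
Set Implicit Arguments. Unset Strict Implicit. Unset Printing Implicit Defensive.

Variable C : numClosedFieldType.
Local Notation s2 := ((sqrtC (2:C))^-1).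

Lemma dagK m n (M : 'M[C]_(m, n)) : dag (dag M) = M.
Proof. by apply/matrixP => i j; rewrite !mxE conjCK. Qed.

Lemma dagMM m n p (A : 'M[C]_(m, n)) (B : 'M[C]_(n, p)) : dag (A *m B) = dag B *m dag A.
Proof. by rewrite /dag trmx_mul map_mxM. Qed.

Lemma dag_mix n (A B : 'M[C]_n) a b : dag (a *: A + b *: B) = a^* *: dag A + b^* *: dag B.
Proof. by apply/matrixP => i j; rewrite !mxE rmorphD !rmorphM. Qed.

Lemma dag_proj n (v : 'cV[C]_n) : dag (proj v) = proj v.
Proof. by rewrite /proj dagMM dagK. Qed.

Lemma dag00 (X : 'M[C]_1) : (dag X) 0 0 = (X 0 0)^*.
Proof. by rewrite !mxE. Qed.

Lemma quad_proj n (v w : 'cV[C]_n) : (dag w *m proj v *m w) 0 0 = sq ((dag v *m w) 0 0).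
Proof.
rewrite /proj mulmxA -(mulmxA _ (dag v)) mxE big_ord1 /sq mulrC.
congr (_ * _).
have -> : dag w *m v = dag (dag v *m w) by rewrite dagMM dagK.
by rewrite dag00.
Qed.

Lemma quad_mix n (A B : 'M[C]_n) a b (w : 'cV[C]_n) :
  (dag w *m (a *: A + b *: B) *m w) 0 0 = a * (dag w *m A *m w) 0 0 + b * (dag w *m B *m w) 0 0.
Proof. by rewrite mulmxDr mulmxDl -!scalemxAr -!scalemxAl !mxE. Qed.

Lemma tr_proj n (v : 'cV[C]_n) : \tr (proj v) = (dag v *m v) 0 0.
Proof. by rewrite /proj mxtrace_mulC /mxtrace big_ord1. Qed.

Lemma tr_mix n (A B : 'M[C]_n) a b : \tr (a *: A + b *: B) = a * \tr A + b * \tr B.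
Proof. by rewrite mxtraceD !mxtraceZ. Qed.

Lemma real_conj (x : C) : 0 <= x -> x^* = x.
Proof. by move=> H; apply/CrealP/ger0_real. Qed.

Lemma density_proj n (v : 'cV[C]_n) : (dag v *m v) 0 0 = 1 -> density (proj v).
Proof.
move=> H; split; first exact: dag_proj.
split; last by rewrite tr_proj.
by move=> w; rewrite quad_proj sq_ge0.
Qed.

Lemma density_mix n (A B : 'M[C]_n) p : density A -> density B -> 0 <= p -> p <= 1 ->
  density (p *: A + (1 - p) *: B).
Proof.
move=> [hA [pA tA]] [hB [pB tB]] p0 p1.
have q0 : 0 <= 1 - p by rewrite subr_ge0.
split; first by rewrite dag_mix hA hB !real_conj.
split; last by rewrite tr_mix tA tB; ring.
by move=> w; rewrite quad_mix addr_ge0 ?mulr_ge0.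
Qed.

End SE.


Section SF.
Import Num.Def.
Set Implicit Arguments. Unset Strict Implicit. Unset Printing Implicit Defensive.

Variable C : numClosedFieldType.
Local Notation s2 := ((sqrtC (2:C))^-1).

Lemma norm2E n (v : 'cV[C]_n) : (dag v *m v) 0 0 = \sum_i (v i 0)^* * v i 0.
Proof. by rewrite mxE; apply: eq_bigr => i _; rewrite !mxE. Qed.

Lemma pure_vals (psi : 'cV[C]_4) (al be : C) :
  psi (idx2 o0 o0) 0 = al -> psi (idx2 o0 o1) 0 = be ->
  psi (idx2 o1 o0) 0 = - be -> psi (idx2 o1 o1) 0 = al ->
  al^* = al -> be^* = be ->
  [/\ (dag psi *m psi) 0 0 = 2 * (al * al + be * be),
      fid (proj psi) = 2 * (al * al),
      Nf (proj psi) (proj psi) = (2 * (al * al + be * be)) ^+ 2,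
      Df (proj psi) (proj psi) = 2 * (al * al + be * be) ^+ 2 &
      tr4 (proj psi) = 2 * (al * al + be * be)].
Proof.
move=> H00 H01 H10 H11 ra rb.
split.
- by rewrite norm2E sum4 !sum2 H00 H01 H10 H11 rmorphN /= ra rb; ring.
- by rewrite /fid !sum2 !projE H00 H11 ra; field; do ?split; rewrite ?pnatr_eq0.
- by rewrite /Nf sum2_4 !projE H00 H01 H10 H11 rmorphN /= ra rb; ring.
- by rewrite /Df !sum2 !projE H00 H01 H10 H11 rmorphN /= ra rb; ring.
- by rewrite /tr4 !sum2 !projE H00 H01 H10 H11 rmorphN /= ra rb; ring.
Qed.

Definition Ft (p F : C) := (F - p) / (1 - p).

Lemma Ft_facts (p F : C) : 0 <= p -> p <= F -> F <= 1 ->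
  [/\ 0 <= Ft p F, 0 <= 1 - Ft p F & (1 - p) * Ft p F = F - p].
Proof.
move=> p0 pF F1.
have p1 : p <= 1 by apply: le_trans F1.
have [pe|pn1] := eqVneq p 1.
  have FE : F = 1 by apply/eqP; rewrite eq_le F1 -pe pF.
  by rewrite /Ft pe FE !subrr invr0 !mulr0 subr0 lexx ler01.
have q0 : 0 < 1 - p by rewrite subr_gt0 lt_neqAle pn1 p1.
have qn : 1 - p != 0 by rewrite gt_eqF.
split.
- by rewrite /Ft divr_ge0 // ?subr_ge0 // ltW.
- have -> : 1 - Ft p F = (1 - F) / (1 - p) by rewrite /Ft; field.
  by rewrite divr_ge0 // ?subr_ge0 // ltW.
- by rewrite /Ft; field.
Qed.

Lemma colmixE n (u w : 'cV[C]_n) x y i : (x *: u + y *: w) i 0 = x * u i 0 + y * w i 0.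
Proof. by rewrite !mxE. Qed.

Lemma psi_vals p F :
  [/\ psi_opt p F (idx2 o0 o0) 0 = sqrtC (Ft p F) * s2,
      psi_opt p F (idx2 o0 o1) 0 = sqrtC (1 - Ft p F) * s2,
      psi_opt p F (idx2 o1 o0) 0 = - (sqrtC (1 - Ft p F) * s2) &
      psi_opt p F (idx2 o1 o1) 0 = sqrtC (Ft p F) * s2].
Proof. by split; rewrite /psi_opt colmixE Bell00E Bell11E /=; ring. Qed.

Lemma Phi_density : density (Phi C).
Proof.
apply: density_proj.
rewrite norm2E sum4 !sum2 !Bell00E /= !rmorphM /= s2_conj ?rmorph0 ?conjC_nat.
rewrite (_ : _ + _ = 2 * (s2 * s2)); last by ring.
by rewrite s2s2 mulfV // pnatr_eq0.
Qed.

Lemma opt_facts p F : 0 <= p -> p <= F -> F <= 1 ->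
  [/\ density (proj (psi_opt p F)), fid (proj (psi_opt p F)) = Ft p F,
      Nf (proj (psi_opt p F)) (proj (psi_opt p F)) = 1,
      Df (proj (psi_opt p F)) (proj (psi_opt p F)) = 2^-1 &
      tr4 (proj (psi_opt p F)) = 1].
Proof.
move=> p0 pF F1.
have [Ft0 Ft1 FtE] := Ft_facts p0 pF F1.
have [e00 e01 e10 e11] := psi_vals p F.
set xa := sqrtC (Ft p F) in e00 e01 e10 e11.
set ya := sqrtC (1 - Ft p F) in e00 e01 e10 e11.
have xr : xa^* = xa by apply: real_conj; rewrite sqrtC_ge0.
have yr : ya^* = ya by apply: real_conj; rewrite sqrtC_ge0.
have xx : xa * xa = Ft p F by rewrite -expr2 sqrtCK.
have yy : ya * ya = 1 - Ft p F by rewrite -expr2 sqrtCK.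
have ra : (xa * s2)^* = xa * s2 by rewrite rmorphM /= xr s2_conj.
have rb : (ya * s2)^* = ya * s2 by rewrite rmorphM /= yr s2_conj.
have [n2 fd nf df tr] := pure_vals e00 e01 e10 e11 ra rb.
have q : xa * s2 * (xa * s2) + ya * s2 * (ya * s2) = 2^-1.
  rewrite (_ : _ + _ = (xa * xa + ya * ya) * (s2 * s2)); last by ring.
  by rewrite xx yy s2s2; ring.
have q2 : 2 * 2^-1 = 1 :> C by rewrite mulfV // pnatr_eq0.
split.
- by apply: density_proj; rewrite n2 q.
- rewrite fd (_ : xa * s2 * (xa * s2) = (xa * xa) * (s2 * s2)); last by ring.
  by rewrite xx s2s2 mulrCA q2 mulr1.
- by rewrite nf q q2 expr1n.
- by rewrite df q; field; do ?split; rewrite ?pnatr_eq0.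
- by rewrite tr q q2.
Qed.

End SF.


Section SG.
Import Num.Def.
Set Implicit Arguments. Unset Strict Implicit. Unset Printing Implicit Defensive.

Variable C : numClosedFieldType.

Lemma trE (s : 'M[C]_4) : \tr s = tr4 s.
Proof. by refine (@eqCC C _ _ _); rewrite /mxtrace sum4. Qed.

Lemma alg_id (p F n dd : C) :
  let f := 1 - 2 * p * (1 - F) in
  f * ((p ^+ 2 / 2 + p * (1 - p) * (1 + 1) / 2 + (1 - p) ^+ 2 * dd) / 2)
   - (p ^+ 2 + p * (F - p) + p * (F - p) + (1 - p) ^+ 2 * n) / 4
  = (1 - p) ^+ 2 / 4 * ((1 - f) * (1 - n) + f * (2 * dd - n)).
Proof. by move=> f; rewrite /f; field; do ?split; rewrite ?pnatr_eq0. Qed.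

Lemma bound (p F : C) r1 r2 : 0 <= p -> p <= F -> F <= 1 ->
  S_pF p F r1 -> S_pF p F r2 -> 0 < pswap false false (tens r1 r2) ->
  Fswap false false (tens r1 r2) <= 1 - 2 * p * (1 - F).
Proof.
move=> p0 pF F1 [_ [[s1 [[h1 [ps1 t1]] E1]] f1]] [_ [[s2 [[h2 [ps2 t2]] E2]] f2]].
have [W HW] := psd_sum h1 ps1.
have [Z HZ] := psd_sum h2 ps2.
have kD := keyD W Z; have kT := keyT W Z; rewrite -HW -HZ in kD kT.
have T1 : tr4 s1 = 1 by rewrite -trE.
have T2 : tr4 s2 = 1 by rewrite -trE.
rewrite T1 T2 mul1r in kT.
rewrite E1 E2 -/(Phi C) in f1 f2 *.
rewrite fidE fid_mix in f1; rewrite fidE fid_mix in f2.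
have e1 : (1 - p) * fid s1 = F - p by rewrite -f1; ring.
have e2 : (1 - p) * fid s2 = F - p by rewrite -f2; ring.
rewrite /Fswap pswapE numE Nf_mix Df_mix e1 e2 T1 T2.
set D := (_ / 2).
move=> Dpos.
have Dn : D != 0 by rewrite gt_eqF.
rewrite -subr_ge0.
set N := (_ / 4).
set f := (1 - 2 * p * (1 - F)).
have -> : f - D^-1 * N = D^-1 * (f * D - N) by rewrite mulrBr [D^-1 * (f * D)]mulrCA mulVf // mulr1.
apply: mulr_ge0; first by rewrite invr_ge0 ltW.
rewrite /D /N /f alg_id.
have p1 : p <= 1 by apply: le_trans F1.
have q0 : 0 <= 1 - p by rewrite subr_ge0.
apply: mulr_ge0; first by rewrite mulr_ge0 ?exprn_ge0 // invr_ge0 ler0n.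
apply: addr_ge0; apply: mulr_ge0 => //.
- rewrite (_ : _ - _ = 2 * p * (1 - F)); last by ring.
  by rewrite !mulr_ge0 ?ler0n // subr_ge0.
- rewrite (_ : 1 - _ = 2 * (F - p) * (1 - F) + (1 - F) ^+ 2 + F ^+ 2); last by ring.
  have F0 : 0 <= F by apply: le_trans pF.
  by rewrite !addr_ge0 ?exprn_ge0 ?mulr_ge0 ?ler0n // subr_ge0.
Qed.

End SG.


Theorem theorem3 (C : numClosedFieldType) (p F : C) :
  0 <= F <= 1 -> 0 <= p <= F ->
  is_Fmax p F (1 - 2 * p * (1 - F)) /\
  (p < 1 ->
     S_pF p F (rho_opt p F) /\
     0 < pswap false false (tens (rho_opt p F) (rho_opt p F)) /\
     Fswap false false (tens (rho_opt p F) (rho_opt p F)) = 1 - 2 * p * (1 - F)).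
Proof.
move=> /andP[F0 F1] /andP[p0 pF].
have [dS fS nS dfS trS] := opt_facts p0 pF F1.
have [Ft0 Ft1 FtE] := Ft_facts p0 pF F1.
have p1 : p <= 1 by apply: le_trans F1.
have Sopt : S_pF p F (rho_opt p F).
  split; [| split].
  - by rewrite /rho_opt -/(Phi C); apply: density_mix => //; exact: Phi_density.
  - by exists (proj (psi_opt p F)); split.
  - by rewrite fidE /rho_opt -/(Phi C) fid_mix fS FtE; ring.
have Dopt : pswap false false (tens (rho_opt p F) (rho_opt p F)) = 4^-1.
  rewrite pswapE /rho_opt -/(Phi C) Df_mix trS dfS.
  by field; do ?split; rewrite ?pnatr_eq0.
have pos : 0 < pswap false false (tens (rho_opt p F) (rho_opt p F)).
  by rewrite Dopt invr_gt0 ltr0n.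
have Nopt : Fswap false false (tens (rho_opt p F) (rho_opt p F)) = 1 - 2 * p * (1 - F).
  rewrite /Fswap Dopt /rho_opt -/(Phi C) numE Nf_mix nS fS FtE.
  by field; do ?split; rewrite ?pnatr_eq0.
split; last by move=> _; split.
split; first by exists (rho_opt p F), (rho_opt p F).
by move=> r1 r2 S1 S2 Dp; apply: bound.
Qed.
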